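(* Let $q\in\mathbb{C}\setminus\{0\}$, let $P,f\in\mathbb{C}[x^{-1}][[x]]$ with $P\ne0$ satisfy $x\sigma_qf+f=P$, and let $n,k$ be integers with $1\le k\le n$. For $0\le j\le k$ set $$A_{k;j}=\prod_{\substack{0\le \ell\le k\\ \ell\ne j}}(P_j-P_\ell)\in\mathbb{C}[x^{-1}][[x]].$$ Then $$L_{n,k}^P(f^n)=(-1)^{k(2n-k+1)/2}\sum_{j=0}^{k}\frac{1}{A_{k;j}}\,(f-P_j)^n .$$
   Context: $\mathbb{C}[x^{-1}][[x]]$ is the field of formal Laurent series; $\sigma_qf(x)=f(qx)$; field elements act as multiplication operators and products of operators are compositions. $P_0=0$, $P_1=P$, $P_m=\sum_{k=0}^{m-1}(-x\sigma_q)^kP$ for $m\ge2$; the $P_m$ are pairwise distinct, so $A_{k;j}\neq0$. The operators $L_{n,k}^P$ are defined by $L_{n,1}^P=\frac{1}{P_1}\left(x^n\sigma_q-(-1)^n\right)$ and $L_{n,k+1}^P=\frac{1}{P_{k+1}}\left(x^{n-k}\sigma_q-(-1)^{n-k}\right)L_{n,k}^P$ for $1\le k<n$. *)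

(* Defs.v *)
(* Formal Laurent series over a field K, represented as
   coefficient functions int -> K (coefficient of x^n at n), with the
   Laurent condition "support bounded below" imposed as a hypothesis. *)
From HB Require Import structures.
From mathcomp Require Import all_boot all_order all_algebra complex.
From mathcomp Require Import Rstruct.
From Stdlib Require Import ClassicalEpsilon.
Set Implicit Arguments. Unset Strict Implicit. Unset Printing Implicit Defensive.
Import Order.TTheory GRing.Theory Num.Theory.
Local Open Scope ring_scope.

Notation Cplx := (complex Rdefinitions.R).

Section Laurent.
Variable K : fieldType.

Definition lseries := int -> K.

Definition is_laurent (f : lseries) : Prop :=
  exists N : int, forall n : int, n < N -> f n = 0.

Definition lbound (f : lseries) : int :=
  match excluded_middle_informative (is_laurent f) with
  | left H => proj1_sig (constructive_indefinite_description _ H)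
  | right _ => 0
  end.

Definition lzero : lseries := fun _ => 0.
Definition lconst (c : K) : lseries := fun n => if n == 0 then c else 0.
Definition lone : lseries := lconst 1.
Definition lxpow (m : int) : lseries := fun n => if n == m then 1 else 0.
Definition lX : lseries := lxpow 1.

Definition ladd (f g : lseries) : lseries := fun n => f n + g n.
Definition lopp (f : lseries) : lseries := fun n => - f n.
Definition lscale (c : K) (f : lseries) : lseries := fun n => c * f n.

Definition lmul (f g : lseries) : lseries := fun n =>
  let a := lbound f in let b := lbound g in
  if a + b <= n then
    \sum_(i < (absz (n - a - b)%R).+1) f (a + i%:Z) * g (n - a - i%:Z)
  else 0.

(* multiplicative inverse in the field of Laurent series (0 for 0) *)
Definition linv (f : lseries) : lseries :=
  match excluded_middle_informative
          (exists g, is_laurent g /\ lmul f g = lone) with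
  | left H => proj1_sig (constructive_indefinite_description _ H)
  | right _ => lzero
  end.

Definition lpow (f : lseries) (m : nat) : lseries := iter m (lmul f) lone.

(* sigma_q f (x) = f (q x) *)
Definition lsigma (q : K) (f : lseries) : lseries := fun n => q ^ n * f n.

Definition lnegxsigma (q : K) (f : lseries) : lseries := lopp (lmul lX (lsigma q f)).

Definition Pm (q : K) (P : lseries) (m : nat) : lseries :=
  match m with
  | 0 => lzero
  | 1 => P
  | _ => \big[ladd/lzero]_(k < m) iter k (lnegxsigma q) P
  end.

Definition Lstep (q : K) (P : lseries) (n j : nat) (y : lseries) : lseries :=
  lmul (linv (Pm q P j.+1))
       (ladd (lmul (lxpow (n - j)%N%:Z) (lsigma q y))
             (lopp (lscale ((-1) ^+ (n - j)) y))).

Fixpoint Lop (q : K) (P : lseries) (n k : nat) (y : lseries) : lseries :=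
  match k with
  | 0 => y
  | k'.+1 => Lstep q P n k' (Lop q P n k' y)
  end.

Definition Akj (q : K) (P : lseries) (k j : nat) : lseries :=
  \big[lmul/lone]_(l < k.+1 | (l : nat) != j) ladd (Pm q P j) (lopp (Pm q P l)).

End Laurent.

(* Main.v *)
Require Import Defs.
From HB Require Import structures.
From mathcomp Require Import all_boot all_order all_algebra complex.
From mathcomp Require Import Rstruct zify ring.
From Stdlib Require Import ClassicalEpsilon FunctionalExtensionality ProofIrrelevance.
Set Implicit Arguments. Unset Strict Implicit. Unset Printing Implicit Defensive.
Import Order.TTheory GRing.Theory Num.Theory.
Local Open Scope ring_scope.

Section Raw.
Variable K : fieldType.
Implicit Types (f g h : lseries K) (a b c n : int).

Definition zb f a := forall n, n < a -> f n = 0.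

Lemma lbound_zb f : is_laurent f -> zb f (lbound f).
Proof.
rewrite /lbound; case: excluded_middle_informative => [H|//] _.
by case: (constructive_indefinite_description _ H).
Qed.

Lemma zb_le f a b : zb f a -> b <= a -> zb f b.
Proof. by move=> H ba n nb; apply: H; apply: lt_le_trans nb ba. Qed.

Definition conv a b f g n : K :=
  if a + b <= n then
    \sum_(i < (absz (n - a - b)%R).+1) f (a + i%:Z) * g (n - a - i%:Z)
  else 0.

Lemma lmul_conv f g : lmul f g = conv (lbound f) (lbound g) f g.
Proof. by []. Qed.

Lemma int_split n a : n < a \/ exists t : nat, n = a + t%:Z.
Proof.
case: (ltrP n a) => h; [by left|right].
exists (absz (n - a)); rewrite gez0_abs ?subr_ge0 //; ring.
Qed.

Lemma conv_eq a b f g (t : nat) :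
  conv a b f g (a + b + t%:Z) = \sum_(i < t.+1) f (a + i%:Z) * g (b + t%:Z - i%:Z).
Proof.
rewrite /conv ifT; last by lia.
have -> : a + b + t%:Z - a - b = t%:Z by ring.
rewrite absz_nat; apply: eq_bigr => i _; congr (_ * g _); ring.
Qed.

Lemma conv_lt a b f g n : n < a + b -> conv a b f g n = 0.
Proof. by rewrite /conv ltNge => /negbTE ->. Qed.

Lemma conv_stepl a b f g : f a = 0 -> conv a b f g = conv (a + 1) b f g.
Proof.
move=> fa; apply: functional_extensionality => n.
case: (int_split n (a + b)) => [lt|[t ->]]; first by rewrite !conv_lt //; lia.
rewrite conv_eq; case: t => [|t].
  rewrite big_ord1 addr0 fa mul0r conv_lt //; lia.
have -> : a + b + t.+1%:Z = (a + 1) + b + t%:Z by lia.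
rewrite conv_eq big_ord_recl /= addr0 fa mul0r add0r.
apply: eq_bigr => i _; rewrite /bump /=; congr (f _ * g _); lia.
Qed.

Lemma conv_stepr a b f g : g b = 0 -> conv a b f g = conv a (b + 1) f g.
Proof.
move=> gb; apply: functional_extensionality => n.
case: (int_split n (a + b)) => [lt|[t ->]]; first by rewrite !conv_lt //; lia.
rewrite conv_eq; case: t => [|t].
  rewrite big_ord1 conv_lt; last by lia. have -> : b + 0%:Z - 0%:Z = b by lia. by rewrite gb mulr0.
have -> : a + b + t.+1%:Z = a + (b + 1) + t%:Z by lia.
rewrite conv_eq big_ord_recr /=.
have -> : b + t.+1%:Z - t.+1%:Z = b by lia.
rewrite gb mulr0 addr0; apply: eq_bigr => i _; congr (f _ * g _); lia.
Qed.

Lemma conv_shl a b f g (d : nat) : zb f (a + d%:Z) -> conv a b f g = conv (a + d%:Z) b f g.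
Proof.
elim: d => [|d IH] H; first by rewrite addr0.
have H' : zb f (a + d%:Z) by apply: (zb_le H); lia.
rewrite (IH H') conv_stepl; last by apply: H; lia.
by congr conv; lia.
Qed.

Lemma conv_shr a b f g (d : nat) : zb g (b + d%:Z) -> conv a b f g = conv a (b + d%:Z) f g.
Proof.
elim: d => [|d IH] H; first by rewrite addr0.
have H' : zb g (b + d%:Z) by apply: (zb_le H); lia.
rewrite (IH H') conv_stepr; last by apply: H; lia.
by congr conv; lia.
Qed.

Lemma int_le_ex a b : a <= b -> exists d : nat, b = a + d%:Z.
Proof. move=> h; exists (absz (b - a)); rewrite gez0_abs ?subr_ge0 //; ring. Qed.

Lemma conv_lel a0 a b f g : zb f a -> a0 <= a -> conv a0 b f g = conv a b f g.
Proof. by move=> H /int_le_ex [d E]; rewrite E in H *; apply: conv_shl. Qed.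

Lemma conv_ler b0 a b f g : zb g b -> b0 <= b -> conv a b0 f g = conv a b f g.
Proof. by move=> H /int_le_ex [d E]; rewrite E in H *; apply: conv_shr. Qed.

Lemma conv_indep a b a' b' f g : zb f a -> zb f a' -> zb g b -> zb g b' ->
  conv a b f g = conv a' b' f g.
Proof.
move=> fa fa' gb gb'.
have -> : conv a b f g = conv a b' f g.
  case: (lerP b b') => h; first by apply: conv_ler.
  by symmetry; apply: conv_ler => //; apply: ltW.
case: (lerP a a') => h; first by apply: conv_lel.
by symmetry; apply: conv_lel => //; apply: ltW.
Qed.

Lemma lmul_conv_any f g a b : is_laurent f -> is_laurent g -> zb f a -> zb g b ->
  lmul f g = conv a b f g.
Proof.
move=> lf lg fa gb; rewrite lmul_conv; apply: conv_indep => //; exact: lbound_zb.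
Qed.

Lemma lmul_eq f g a b (t : nat) : is_laurent f -> is_laurent g -> zb f a -> zb g b ->
  lmul f g (a + b + t%:Z) = \sum_(i < t.+1) f (a + i%:Z) * g (b + t%:Z - i%:Z).
Proof. by move=> lf lg fa gb; rewrite (lmul_conv_any lf lg fa gb) conv_eq. Qed.

Lemma lmul_zb f g a b : is_laurent f -> is_laurent g -> zb f a -> zb g b ->
  zb (lmul f g) (a + b).
Proof. by move=> lf lg fa gb n nlt; rewrite (lmul_conv_any lf lg fa gb) conv_lt. Qed.

Lemma laurent_zb f a : zb f a -> is_laurent f.
Proof. by exists a. Qed.

Lemma lmul_laurent f g : is_laurent f -> is_laurent g -> is_laurent (lmul f g).
Proof.
move=> lf lg; apply: (laurent_zb (a := lbound f + lbound g)).
by apply: lmul_zb => //; apply: lbound_zb.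
Qed.

Definition pol a (M : nat) f : {poly K} := \poly_(i < M) f (a + i%:Z).

Lemma lmul_pol f g a b (M t : nat) : is_laurent f -> is_laurent g -> zb f a -> zb g b ->
  (t < M)%N -> lmul f g (a + b + t%:Z) = (pol a M f * pol b M g)`_t.
Proof.
move=> lf lg fa gb tM; rewrite lmul_eq // coefM; apply: eq_bigr => i _.
have it := ltn_ord i.
rewrite !coef_poly ifT; last by lia.
rewrite ifT; last by lia.
congr (_ * g _); lia.
Qed.

Lemma coefM_eqt (p p' q q' : {poly K}) (t : nat) :
  (forall i, (i <= t)%N -> p`_i = p'`_i) -> (forall i, (i <= t)%N -> q`_i = q'`_i) ->
  (p * q)`_t = (p' * q')`_t.
Proof.
move=> hp hq; rewrite !coefM; apply: eq_bigr => i _.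
have it := ltn_ord i.
rewrite hp ?hq //; lia.
Qed.

Lemma pol_lmul f g a b (M i : nat) : is_laurent f -> is_laurent g -> zb f a -> zb g b ->
  (i < M)%N -> (pol (a + b) M (lmul f g))`_i = (pol a M f * pol b M g)`_i.
Proof. by move=> lf lg fa gb iM; rewrite coef_poly iM (@lmul_pol _ _ _ _ M). Qed.

Lemma lmulC f g : is_laurent f -> is_laurent g -> lmul f g = lmul g f.
Proof.
move=> lf lg; apply: functional_extensionality => n.
have fa := lbound_zb lf; have gb := lbound_zb lg.
set a := lbound f in fa *; set b := lbound g in gb *.
case: (int_split n (a + b)) => [lt|[t ->]].
  rewrite (lmul_zb lf lg fa gb) // (lmul_zb lg lf gb fa) //; lia.
transitivity ((pol b t.+1 g * pol a t.+1 f)`_t).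
  by rewrite (@lmul_pol _ _ _ _ t.+1) // mulrC.
by rewrite (addrC a b) (@lmul_pol _ _ _ _ t.+1).
Qed.

Lemma lmulA f g h : is_laurent f -> is_laurent g -> is_laurent h ->
  lmul (lmul f g) h = lmul f (lmul g h).
Proof.
move=> lf lg lh; apply: functional_extensionality => n.
have fa := lbound_zb lf; have gb := lbound_zb lg; have hc := lbound_zb lh.
set a := lbound f in fa *; set b := lbound g in gb *; set c := lbound h in hc *.
have lfg := lmul_laurent lf lg; have lgh := lmul_laurent lg lh.
have fgab := lmul_zb lf lg fa gb; have ghbc := lmul_zb lg lh gb hc.
case: (int_split n (a + b + c)) => [lt|[t ->]].
  rewrite (lmul_zb lfg lh fgab hc) // (lmul_zb lf lgh fa ghbc) //; lia.
rewrite (@lmul_pol _ _ _ _ t.+1) //.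
have -> : a + b + c + t%:Z = a + (b + c) + t%:Z by ring.
rewrite (@lmul_pol _ _ _ _ t.+1) //.
rewrite (coefM_eqt (p' := pol a t.+1 f * pol b t.+1 g) (q' := pol c t.+1 h)) //; last first.
  by move=> i it; rewrite pol_lmul.
rewrite [RHS](coefM_eqt (p' := pol a t.+1 f) (q' := pol b t.+1 g * pol c t.+1 h)) //; last first.
  by move=> i it; rewrite pol_lmul.
by rewrite mulrA.
Qed.

Lemma zb_common f g a b : zb f a -> zb g b -> exists c, zb f c /\ zb g c.
Proof.
move=> fa gb; case: (lerP a b) => h.
  by exists a; split => //; apply: (zb_le gb).
by exists b; split => //; apply: (zb_le fa); apply: ltW.
Qed.

Lemma ladd_zb f g a : zb f a -> zb g a -> zb (ladd f g) a.
Proof. by move=> fa ga n na; rewrite /ladd fa ?ga ?addr0. Qed.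

Lemma ladd_laurent f g : is_laurent f -> is_laurent g -> is_laurent (ladd f g).
Proof.
move=> [a fa] [b gb]; have [c [fc gc]] := zb_common fa gb.
by exists c; apply: ladd_zb.
Qed.

Lemma lmulDl f g h : is_laurent f -> is_laurent g -> is_laurent h ->
  lmul (ladd f g) h = ladd (lmul f h) (lmul g h).
Proof.
move=> lf lg lh; apply: functional_extensionality => n.
have [c [fc gc]] := zb_common (lbound_zb lf) (lbound_zb lg).
have hd := lbound_zb lh.
rewrite /ladd (lmul_conv_any (ladd_laurent lf lg) lh (ladd_zb fc gc) hd).
rewrite (lmul_conv_any lf lh fc hd) (lmul_conv_any lg lh gc hd) /conv.
case: ifP => _; last by rewrite addr0.
by rewrite -big_split /=; apply: eq_bigr => i _; rewrite mulrDl.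
Qed.

Lemma lone_zb : zb (lone K) 0.
Proof. by move=> n n0; rewrite /lone /lconst ifF //; apply/negbTE; rewrite lt_eqF. Qed.

Lemma lone_laurent : is_laurent (lone K).
Proof. exact: laurent_zb lone_zb. Qed.

Lemma lmul1 f : is_laurent f -> lmul (lone K) f = f.
Proof.
move=> lf; apply: functional_extensionality => n.
have fb := lbound_zb lf; set b := lbound f in fb *.
case: (int_split n (0 + b)) => [lt|[t ->]].
  by rewrite (lmul_zb lone_laurent lf lone_zb fb) // fb //; move: lt; rewrite add0r.
rewrite (lmul_eq _ lone_laurent lf lone_zb fb).
rewrite big_ord_recl big1 ?addr0.
  by rewrite /lone /lconst /= mul1r add0r.
move=> i _; by rewrite /lone /lconst /= mul0r.
Qed.

Lemma lzero_laurent : is_laurent (lzero K).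
Proof. by exists 0. Qed.

Lemma lopp_laurent f : is_laurent f -> is_laurent (lopp f).
Proof. by move=> [a fa]; exists a => n na; rewrite /lopp fa ?oppr0. Qed.

Lemma lscale_laurent (s : K) f : is_laurent f -> is_laurent (lscale s f).
Proof. by move=> [a fa]; exists a => n na; rewrite /lscale fa ?mulr0. Qed.

Lemma lsigma_laurent (q : K) f : is_laurent f -> is_laurent (lsigma q f).
Proof. by move=> [a fa]; exists a => n na; rewrite /lsigma fa ?mulr0. Qed.

Lemma lxpow_laurent m : is_laurent (lxpow K m).
Proof. by exists m => n nm; rewrite /lxpow ifF //; apply/negbTE; rewrite lt_eqF. Qed.

End Raw.

From HB Require Import structures.
From mathcomp Require Import all_boot all_order all_algebra complex.
From mathcomp Require Import Rstruct zify ring.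
From Stdlib Require Import Classical ClassicalEpsilon FunctionalExtensionality ProofIrrelevance.
Set Implicit Arguments. Unset Strict Implicit. Unset Printing Implicit Defensive.
Import Order.TTheory GRing.Theory Num.Theory.
Local Open Scope ring_scope.

Section Inv.
Variable K : fieldType.
Implicit Types (f g h : lseries K) (a b n : int).

Lemma val_exists f : is_laurent f -> f <> lzero K -> exists v, zb f v /\ f v != 0.
Proof.
move=> [N fN] fnz.
have [m fm] : exists m, f m != 0.
  apply: NNPP => H; apply: fnz; apply: functional_extensionality => m.
  by apply/eqP; apply: negbNE; apply/negP => hm; apply: H; exists m.
have mN : N <= m by rewrite leNgt; apply/negP => /fN; apply/eqP.
have ex : exists k : nat, f (N + k%:Z) != 0.
  exists (absz (m - N)); rewrite gez0_abs ?subr_ge0 //. by have -> : N + (m - N) = m by ring.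
case: (ex_minnP ex) => k0 fk0 kmin.
exists (N + k0%:Z); split => // n nlt.
case: (int_split n N) => [/fN //|[j E]]; subst n.
have jk : (j < k0)%N by lia.
apply/eqP; apply: negbNE; apply/negP => hj.
by have := kmin _ hj; lia.
Qed.

Fixpoint iseq (u : nat -> K) (t : nat) : seq K :=
  match t with
  | 0 => [:: (u 0%N)^-1]
  | t'.+1 => rcons (iseq u t') (- (u 0%N)^-1 *
       \sum_(i < t'.+1) u i.+1 * nth 0 (iseq u t') (t' - i))
  end.

Definition ih u t := nth 0 (iseq u t) t.

Lemma size_iseq u t : size (iseq u t) = t.+1.
Proof. by elim: t => [|t IH] //=; rewrite size_rcons IH. Qed.

Lemma nth_iseq u t i : (i <= t)%N -> nth 0 (iseq u t) i = ih u i.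
Proof.
elim: t => [|t IH] it; first by have -> : i = 0%N by lia.
case: (ltnP i t.+1) => h; last by have -> : i = t.+1 by lia.
by rewrite /= nth_rcons size_iseq h IH //; lia.
Qed.

Lemma ih_rec u t : ih u t.+1 = - (u 0%N)^-1 * \sum_(i < t.+1) u i.+1 * ih u (t - i).
Proof.
rewrite /ih /= nth_rcons size_iseq ltnn eqxx; congr (_ * _).
by apply: eq_bigr => i _; rewrite nth_iseq //; lia.
Qed.

Lemma ih_eq u t : u 0%N != 0 -> \sum_(i < t.+1) u i * ih u (t - i) = (t == 0%N)%:R.
Proof.
move=> u0; case: t => [|t].
  by rewrite big_ord1 /ih /= mulfV.
rewrite big_ord_recl /= subn0 ih_rec.
under eq_bigr => i _ do rewrite /bump /= add1n subSS.
set S := \sum_(i < t.+1) _; field; exact: u0.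
Qed.

Definition ginv f v (m : int) : K :=
  if - v <= m then ih (fun i => f (v + i%:Z)) (absz (m + v)) else 0.

Lemma ginv_zb f v : zb (ginv f v) (- v).
Proof. by move=> n nv; rewrite /ginv ifF //; apply/negbTE; rewrite -ltNge. Qed.

Lemma ginv_spec f v : is_laurent f -> zb f v -> f v != 0 ->
  lmul f (ginv f v) = lone K.
Proof.
move=> lf fv f0; have lg : is_laurent (ginv f v) by exists (- v); apply: ginv_zb.
apply: functional_extensionality => n.
case: (int_split n (v + - v)) => [lt|[t ->]].
  rewrite (lmul_zb lf lg fv (@ginv_zb f v)) // /lone /lconst ifF //.
  by apply/negbTE; move: lt; rewrite subrr => /lt_eqF ->.
rewrite (lmul_eq _ lf lg fv (@ginv_zb f v)).
rewrite (eq_bigr (fun i : 'I_t.+1 => f (v + i%:Z) * ih (fun i => f (v + i%:Z)) (t - i))).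
  rewrite ih_eq ?addr0 //; rewrite /lone /lconst subrr add0r.
  by case: t.
move=> i _; rewrite /ginv ifT; last by have := ltn_ord i; lia.
have -> : - v + t%:Z - i%:Z + v = (t - i)%N%:Z by have := ltn_ord i; lia.
by rewrite absz_nat.
Qed.

Lemma linv_laurent f : is_laurent (linv f).
Proof.
rewrite /linv; case: excluded_middle_informative => [H|_]; last exact: lzero_laurent K.
by case: (constructive_indefinite_description _ H) => g [].
Qed.

Lemma linv_spec f : is_laurent f -> f <> lzero K -> lmul f (linv f) = lone K.
Proof.
move=> lf fnz; rewrite /linv; case: excluded_middle_informative => [H|H].
  by case: (constructive_indefinite_description _ H) => g [].
exfalso; apply: H; have [v [fv f0]] := val_exists lf fnz.
exists (ginv f v); split; last exact: ginv_spec.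
by exists (- v); apply: ginv_zb.
Qed.

Lemma lmul0 g : is_laurent g -> lmul (lzero K) g = lzero K.
Proof.
move=> lg; apply: functional_extensionality => n.
rewrite (@lmul_conv_any _ _ _ 0 _ (lzero_laurent K) lg (fun _ _ => erefl) (lbound_zb lg)) /conv.
by case: ifP => // _; rewrite big1 // => i _; rewrite mul0r.
Qed.

Lemma lone_neq0 : lone K <> lzero K.
Proof. move=> /(congr1 (fun f => f 0)); rewrite /lone /lconst /lzero eqxx => /eqP; by rewrite oner_eq0. Qed.

Lemma linv0 : linv (lzero K) = lzero K.
Proof.
rewrite /linv; case: excluded_middle_informative => [H|//].
by exfalso; case: H => g [lg]; rewrite lmul0 //; move/esym; exact: lone_neq0.
Qed.

End Inv.

From HB Require Import structures.
From mathcomp Require Import all_boot all_order all_algebra complex.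
From mathcomp Require Import Rstruct zify ring boolp.
From Stdlib Require Import Classical ClassicalEpsilon FunctionalExtensionality ProofIrrelevance.
Set Implicit Arguments. Unset Strict Implicit. Unset Printing Implicit Defensive.
Import Order.TTheory GRing.Theory Num.Theory.
Local Open Scope ring_scope.

Notation KK := Cplx.

Record LS := MkLS { lsv : lseries KK ; lsP : is_laurent lsv }.

HB.instance Definition _ := gen_eqMixin LS.
HB.instance Definition _ := gen_choiceMixin LS.

Lemma ls_inj (x y : LS) : lsv x = lsv y -> x = y.
Proof.
case: x => x px; case: y => y py /= E; subst y.
by rewrite (proof_irrelevance _ px py).
Qed.

Definition ls0 := MkLS (lzero_laurent KK).
Definition ls1 := MkLS (lone_laurent KK).
Definition lsadd (x y : LS) := MkLS (ladd_laurent (lsP x) (lsP y)).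
Definition lsopp (x : LS) := MkLS (lopp_laurent (lsP x)).
Definition lsmul (x y : LS) := MkLS (lmul_laurent (lsP x) (lsP y)).
Definition lsinv (x : LS) := MkLS (linv_laurent (lsv x)).

Lemma lsaddA : associative lsadd.
Proof. by move=> x y z; apply: ls_inj; apply: functional_extensionality => n; rewrite /= /ladd addrA. Qed.
Lemma lsaddC : commutative lsadd.
Proof. by move=> x y; apply: ls_inj; apply: functional_extensionality => n; rewrite /= /ladd addrC. Qed.
Lemma lsadd0 : left_id ls0 lsadd.
Proof. by move=> x; apply: ls_inj; apply: functional_extensionality => n; rewrite /= /ladd /lzero add0r. Qed.
Lemma lsaddN : left_inverse ls0 lsopp lsadd.
Proof. by move=> x; apply: ls_inj; apply: functional_extensionality => n; rewrite /= /ladd /lopp /lzero addNr. Qed.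

HB.instance Definition _ := GRing.isZmodule.Build LS lsaddA lsaddC lsadd0 lsaddN.

Lemma lsmulA : associative lsmul.
Proof. by move=> x y z; apply: ls_inj; rewrite /= lmulA //; apply: lsP. Qed.
Lemma lsmulC : commutative lsmul.
Proof. by move=> x y; apply: ls_inj; rewrite /= lmulC //; apply: lsP. Qed.
Lemma lsmul1 : left_id ls1 lsmul.
Proof. by move=> x; apply: ls_inj; rewrite /= lmul1 //; apply: lsP. Qed.
Lemma lsmulDl : left_distributive lsmul (+%R : LS -> LS -> LS).
Proof. by move=> x y z; apply: ls_inj; rewrite /= lmulDl //; apply: lsP. Qed.
Lemma ls1_neq0 : ls1 != 0.
Proof. by apply/eqP => /(congr1 lsv) /=; apply: lone_neq0. Qed.

HB.instance Definition _ := GRing.Zmodule_isComNzRing.Build LS lsmulA lsmulC lsmul1 lsmulDl ls1_neq0.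

Lemma lsmulVf (x : LS) : x != 0 -> lsmul (lsinv x) x = 1.
Proof.
move=> xnz; apply: ls_inj => /=; rewrite lmulC; try apply: lsP.
  apply: linv_spec; first exact: lsP.
  by move=> E; move/eqP: xnz; apply; apply: ls_inj.
exact: linv_laurent.
Qed.

Lemma lsinv0 : lsinv 0 = 0.
Proof. by apply: ls_inj; rewrite /= linv0. Qed.

HB.instance Definition _ := GRing.ComNzRing_isField.Build LS lsmulVf lsinv0.

Lemma lsvD (x y : LS) : lsv (x + y) = ladd (lsv x) (lsv y). Proof. by []. Qed.
Lemma lsvN (x : LS) : lsv (- x) = lopp (lsv x). Proof. by []. Qed.
Lemma lsvM (x y : LS) : lsv (x * y) = lmul (lsv x) (lsv y). Proof. by []. Qed.
Lemma lsvV (x : LS) : lsv (x^-1) = linv (lsv x). Proof. by []. Qed.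
Lemma lsv0 : lsv 0 = lzero KK. Proof. by []. Qed.
Lemma lsv1 : lsv 1 = lone KK. Proof. by []. Qed.


Lemma lX_zb : zb (lX KK) 1.
Proof. by move=> n n1; rewrite /lX /lxpow ifF //; apply/negbTE; rewrite lt_eqF. Qed.

Lemma lmulX_coef (h : lseries KK) m : is_laurent h -> lmul (lX KK) h m = h (m - 1).
Proof.
move=> lh; have hb := lbound_zb lh; set b := lbound h in hb *.
case: (int_split m (1 + b)) => [lt|[t ->]].
  rewrite (lmul_zb (lxpow_laurent _ _) lh lX_zb hb) // hb //; lia.
rewrite (lmul_eq _ (lxpow_laurent _ _) lh lX_zb hb) big_ord_recl big1.
  by rewrite /lX /lxpow /= mul1r addr0; congr h; lia.
move=> i _; by rewrite /lxpow /= mul0r.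
Qed.

Lemma lsigma_zb q (f : lseries KK) a : zb f a -> zb (lsigma q f) a.
Proof. by move=> fa n na; rewrite /lsigma fa ?mulr0. Qed.

Lemma lsigma_mul (q : KK) (f g : lseries KK) : q != 0 -> is_laurent f -> is_laurent g ->
  lsigma q (lmul f g) = lmul (lsigma q f) (lsigma q g).
Proof.
move=> q0 lf lg; apply: functional_extensionality => n.
have fa := lbound_zb lf; have gb := lbound_zb lg.
set a := lbound f in fa *; set b := lbound g in gb *.
have lsf := lsigma_laurent q lf; have lsg := lsigma_laurent q lg.
case: (int_split n (a + b)) => [lt|[t ->]].
  rewrite /lsigma (lmul_zb lf lg fa gb) // (lmul_zb lsf lsg (lsigma_zb q fa) (lsigma_zb q gb)) //.
  by rewrite mulr0.
rewrite /lsigma (lmul_eq _ lf lg fa gb).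
rewrite (lmul_eq _ lsf lsg (lsigma_zb q fa) (lsigma_zb q gb)) mulr_sumr.
apply: eq_bigr => i _; rewrite /lsigma.
have -> : a + b + t%:Z = (a + i%:Z) + (b + t%:Z - i%:Z) by ring.
rewrite expfzDr //; ring.
Qed.

Section Sig.
Variable q : KK.
Hypothesis q0 : q != 0.

Definition sigL (x : LS) : LS := MkLS (lsigma_laurent q (lsP x)).

Lemma sigD x y : sigL (x + y) = sigL x + sigL y.
Proof. by apply: ls_inj; apply: functional_extensionality => n; rewrite /= /lsigma /ladd mulrDr. Qed.
Lemma sigN x : sigL (- x) = - sigL x.
Proof. by apply: ls_inj; apply: functional_extensionality => n; rewrite /= /lsigma /lopp mulrN. Qed.
Lemma sigB x y : sigL (x - y) = sigL x - sigL y.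
Proof. by rewrite sigD sigN. Qed.
Lemma sig0 : sigL 0 = 0.
Proof. by apply: ls_inj; apply: functional_extensionality => n; rewrite /= /lsigma /lzero mulr0. Qed.
Lemma sig1 : sigL 1 = 1.
Proof.
apply: ls_inj; apply: functional_extensionality => n; rewrite /= /lsigma /lone /lconst.
by case: eqP => [->|_]; rewrite ?expr0z ?mulr1 ?mulr0.
Qed.
Lemma sigM x y : sigL (x * y) = sigL x * sigL y.
Proof. by apply: ls_inj; rewrite /= lsigma_mul //; apply: lsP. Qed.
Lemma sigX x m : sigL (x ^+ m) = sigL x ^+ m.
Proof. by elim: m => [|m IH]; rewrite ?expr0 ?sig1 // !exprS sigM IH. Qed.
Lemma sigV x : sigL (x^-1) = (sigL x)^-1.
Proof.
have [->|xnz] := eqVneq x 0; first by rewrite invr0 sig0 invr0.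
have E : sigL x * sigL x^-1 = 1 by rewrite -sigM mulfV // sig1.
have sx0 : sigL x != 0 by apply/eqP => h; move: E; rewrite h mul0r => /eqP; rewrite eq_sym oner_eq0.
by rewrite -[sigL x^-1]mul1r -(mulVf sx0) -mulrA E mulr1.
Qed.
Lemma sign1 m : sigL ((-1) ^+ m) = (-1) ^+ m.
Proof. by rewrite sigX sigN sig1. Qed.
Lemma sig_prod (I : Type) (r : seq I) (Pr : pred I) (F : I -> LS) :
  sigL (\prod_(i <- r | Pr i) F i) = \prod_(i <- r | Pr i) sigL (F i).
Proof. exact: (big_morph sigL sigM sig1). Qed.
Lemma sig_sum (I : Type) (r : seq I) (Pr : pred I) (F : I -> LS) :
  sigL (\sum_(i <- r | Pr i) F i) = \sum_(i <- r | Pr i) sigL (F i).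
Proof. exact: (big_morph sigL sigD sig0). Qed.

End Sig.

Definition XL : LS := MkLS (lxpow_laurent KK 1).

Lemma XL_neq0 : XL != 0.
Proof.
apply/eqP => /(congr1 (fun x => lsv x 1)); rewrite /= /lxpow /lzero eqxx => /eqP.
by rewrite oner_eq0.
Qed.

Lemma lxpowE (m : nat) : lxpow KK m%:Z = lsv (XL ^+ m).
Proof.
elim: m => [|m IH].
  by apply: functional_extensionality => n; rewrite /lxpow expr0 /= /lone /lconst.
rewrite exprS lsvM -IH; apply: functional_extensionality => n.
rewrite lmulX_coef; last exact: lxpow_laurent.
rewrite /lxpow; congr (if _ then _ else _); apply/eqP/eqP; lia.
Qed.

Lemma lpowE (y : LS) m : lpow (lsv y) m = lsv (y ^+ m).
Proof. by elim: m => [|m IH] //=; rewrite exprS lsvM -IH. Qed.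

Lemma lscaleE (y : LS) m : lscale ((-1) ^+ m) (lsv y) = lsv ((-1) ^+ m * y).
Proof.
elim: m => [|m IH].
  by rewrite !expr0 mul1r; apply: functional_extensionality => n; rewrite /lscale mul1r.
rewrite [in RHS]exprS mulN1r mulNr lsvN -IH; apply: functional_extensionality => n.
by rewrite /lscale /lopp exprS mulN1r mulNr.
Qed.

From HB Require Import structures.
From mathcomp Require Import all_boot all_order all_algebra complex.
From mathcomp Require Import Rstruct zify ring boolp.
From Stdlib Require Import Classical ClassicalEpsilon FunctionalExtensionality ProofIrrelevance.
Set Implicit Arguments. Unset Strict Implicit. Unset Printing Implicit Defensive.
Import Order.TTheory GRing.Theory Num.Theory.
Local Open Scope ring_scope.

Lemma prod_ne_recr (F : nat -> LS) k i : (i <= k)%N ->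
  \prod_(l < k.+2 | (l : nat) != i) F l = (\prod_(l < k.+1 | (l : nat) != i) F l) * F k.+1.
Proof.
move=> ik; rewrite big_mkcond big_ord_recr /= ifT; last by apply/eqP; lia.
by rewrite -big_mkcond.
Qed.

Lemma prod_ne_recl (F : nat -> LS) k j :
  \prod_(l < k.+2 | (l : nat) != j.+1) F l = F 0%N * \prod_(l < k.+1 | (l : nat) != j) F l.+1.
Proof. by rewrite big_mkcond big_ord_recl /= -big_mkcond. Qed.

Lemma prod_ne_const (c : LS) k j : (j <= k)%N -> \prod_(l < k.+1 | (l : nat) != j) c = c ^+ k.
Proof.
elim: k j => [|k IH] j jk.
  have -> : j = 0%N by lia.
  by rewrite big_mkcond big_ord1.
case: (ltnP k j) => h.
  have -> : j = k.+1 by lia.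
  rewrite big_mkcond big_ord_recr /= eqxx mulr1.
  rewrite (eq_bigr (fun _ => c)); first by rewrite prodr_const card_ord.
  by move=> i _; rewrite ifT //; apply/eqP; have := ltn_ord i; lia.
by rewrite (prod_ne_recr (fun _ => c) h) IH // exprS mulrC.
Qed.

Section Main.
Variable q : KK.
Hypothesis q0 : q != 0.
Variables F Pl : LS.
Hypothesis hP : XL * sigL q F + F = Pl.
Hypothesis Pnz : Pl != 0.
Variable n : nat.

Definition NL (y : LS) : LS := - (XL * sigL q y).
Definition gL j := iter j NL F.
Definition PL j := \sum_(k < j) iter k NL Pl.
Definition AL k j := \prod_(l < k.+1 | (l : nat) != j) (PL j - PL l).

Lemma NLB a b : NL (a - b) = NL a - NL b.
Proof. by rewrite /NL sigB // mulrBr opprB opprK addrC. Qed.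

Lemma iterNB k a b : iter k NL (a - b) = iter k NL a - iter k NL b.
Proof. by elim: k => [|k IH] //=; rewrite IH NLB. Qed.

Lemma PL0 : PL 0 = 0.
Proof. by rewrite /PL big_ord0. Qed.

Lemma PL_eq j : PL j = F - gL j.
Proof.
elim: j => [|j IH]; first by rewrite PL0 /gL /= subrr.
rewrite /PL big_ord_recr /= -/(PL j) IH.
have -> : Pl = F - NL F by rewrite -hP /NL opprK addrC.
rewrite iterNB /gL /=; rewrite -iterSr /=; ring.
Qed.

Lemma gS j : XL * sigL q (gL j) = - gL j.+1.
Proof. by rewrite /gL /= /NL opprK. Qed.

Lemma gL_coef j m : exists c : KK, c != 0 /\ lsv (gL j) m = c * lsv F (m - j%:Z).
Proof.
elim: j m => [|j IH] m.
  by exists 1; rewrite oner_eq0 mul1r subr0.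
have [c [c0 E]] := IH (m - 1).
exists (- q ^ (m - 1) * c); split.
  by rewrite mulf_neq0 // oppr_eq0 expfz_neq0.
rewrite /gL /= -/(gL j) /lopp (lmulX_coef _ (lsigma_laurent q (lsP _))).
rewrite /lsigma E mulNr mulrA mulNr; congr (- (_ * lsv F _)); lia.
Qed.

Lemma F_neq0 : lsv F <> lzero KK.
Proof.
move=> E; have F0 : F = 0 by apply: ls_inj.
by move: Pnz; rewrite -hP F0 sig0 // mulr0 addr0 eqxx.
Qed.

Lemma gL_neq l j : l != j -> gL l != gL j.
Proof.
wlog lj : l j / (l < j)%N.
  move=> W lj; case: (ltngtP l j) => h; first exact: W.
    by rewrite eq_sym W // eq_sym.
  by move: lj; rewrite h eqxx.
move=> _; have [v [Fv Fv0]] := val_exists (lsP F) F_neq0.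
apply/eqP => /(congr1 (fun x => lsv x (v + l%:Z))).
have [c [c0 ->]] := gL_coef l (v + l%:Z); have [c' [_ ->]] := gL_coef j (v + l%:Z).
rewrite (Fv (v + l%:Z - j%:Z)); last by lia.
have -> : v + l%:Z - l%:Z = v by ring.
by rewrite mulr0 => /eqP; rewrite mulf_eq0 (negbTE c0) (negbTE Fv0).
Qed.

Lemma PLB j l : PL j - PL l = gL l - gL j.
Proof. by rewrite !PL_eq; ring. Qed.

Lemma PL_neq j l : j != l -> PL j - PL l != 0.
Proof. by move=> jl; rewrite PLB subr_eq0 gL_neq // eq_sym. Qed.

Lemma PLS_neq0 j : PL j.+1 != 0.
Proof. by have := @PL_neq j.+1 0%N erefl; rewrite PL0 subr0. Qed.

Lemma AL_neq0 k j : AL k j != 0.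
Proof. by rewrite /AL; apply/prodf_neq0 => l lj; apply: PL_neq; rewrite eq_sym. Qed.

Lemma AR k i : (i <= k)%N -> AL k.+1 i = AL k i * (PL i - PL k.+1).
Proof. by move=> ik; rewrite /AL (prod_ne_recr (fun l => PL i - PL l) ik). Qed.

Lemma sigPL j l : XL * sigL q (PL j - PL l) = PL l.+1 - PL j.+1.
Proof. by rewrite PLB sigB // mulrBr !gS !PL_eq; ring. Qed.

Lemma SA k j : (j <= k)%N -> sigL q (AL k j) * XL ^+ k * PL j.+1 = (-1) ^+ k * AL k.+1 j.+1.
Proof.
move=> jk; rewrite /AL sig_prod // -(prod_ne_const XL jk) -big_split /=.
rewrite (prod_ne_recl (fun l => PL j.+1 - PL l)) PL0 subr0.
under eq_bigr => l _ do rewrite mulrC sigPL -[PL l.+1 - _]opprB -mulN1r.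
rewrite big_split /= (prod_ne_const (-1) jk); ring.
Qed.

Fixpoint LopL (k : nat) (y : LS) : LS :=
  match k with
  | 0 => y
  | k'.+1 => (PL k'.+1)^-1 * (XL ^+ (n - k')%N * sigL q (LopL k' y) - (-1) ^+ (n - k')%N * LopL k' y)
  end.

Definition ee k := ((k * (2 * n - k + 1)) %/ 2)%N.

Lemma term k j : (j <= k)%N -> (k <= n)%N ->
  XL ^+ (n - k)%N * ((sigL q (AL k j))^-1 * (sigL q (gL j)) ^+ n) =
  (-1) ^+ (n - k)%N * (PL j.+1 * (AL k.+1 j.+1)^-1 * gL j.+1 ^+ n).
Proof.
move=> jk kn.
have X0 := XL_neq0.
have b0 : XL ^+ k != 0 by rewrite expf_neq0.
have a0 : XL ^+ (n - k)%N != 0 by rewrite expf_neq0.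
have p0 := PLS_neq0 j.
have A0 := AL_neq0 k.+1 j.+1.
have e0 : (-1) ^+ k != 0 :> LS by rewrite expf_neq0 // oppr_eq0 oner_eq0.
have sAE : sigL q (AL k j) = (-1) ^+ k * AL k.+1 j.+1 / (XL ^+ k * PL j.+1).
  by rewrite -SA //; field; rewrite b0 p0.
have sgE : (sigL q (gL j)) ^+ n = (-1) ^+ (n - k)%N * (-1) ^+ k * gL j.+1 ^+ n / (XL ^+ (n - k)%N * XL ^+ k).
  rewrite -!exprD subnK // -exprNn -gS exprMn; field; rewrite expf_neq0 //.
rewrite sAE sgE; field.
by rewrite A0 e0 b0 p0 a0.
Qed.

Lemma main k : (k <= n)%N ->
  LopL k (F ^+ n) = (-1) ^+ ee k * \sum_(j < k.+1) (AL k j)^-1 * (F - PL j) ^+ n.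
Proof.
elim: k => [|k IH] kn.
  by rewrite /ee /= expr0 mul1r big_ord1 /AL big_mkcond big_ord1 /= invr1 mul1r PL0 subr0.
rewrite /= IH; last by lia.
set s := (-1) ^+ ee k.
have eeS : ee k.+1 = (ee k + (n - k)%N)%N by rewrite /ee; nia.
rewrite eeS exprD -/s.
have p0 := PLS_neq0 k.
set C := fun i => PL i * (AL k.+1 i)^-1 * gL i ^+ n.
set B := fun i => (AL k i)^-1 * gL i ^+ n.
set D := fun i => (AL k.+1 i)^-1 * gL i ^+ n.
have gE : forall j, F - PL j = gL j by move=> j; rewrite PL_eq; ring.
have SE : \sum_(j < k.+1) (AL k j)^-1 * (F - PL j) ^+ n = \sum_(j < k.+1) B j.
  by apply: eq_bigr => j _; rewrite gE.
rewrite SE sigM // sign1 // sig_sum //.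
have T : XL ^+ (n - k)%N * \sum_(j < k.+1) sigL q (B j) = (-1) ^+ (n - k)%N * \sum_(j < k.+1) C j.+1.
  rewrite !mulr_sumr; apply: eq_bigr => j _.
  rewrite /B sigM // sigV // sigX // term //; last by lia.
  by have := ltn_ord j; lia.
have H1 : \sum_(i < k.+1) D i = (PL k.+1)^-1 * (\sum_(i < k.+1) C i - \sum_(i < k.+1) B i).
  rewrite -sumrB mulr_sumr; apply: eq_bigr => i _.
  have ik : (i <= k)%N by have := ltn_ord i; lia.
  have A0 := AL_neq0 k i.
  have d0 : PL i - PL k.+1 != 0 by apply: PL_neq; apply/eqP; lia.
  rewrite /C /B /D AR //; field.
  by rewrite A0 d0 p0.
have C0 : C 0%N = 0 by rewrite /C PL0 !mul0r.
have H2 : \sum_(j < k.+1) C j.+1 = \sum_(i < k.+1) C i + C k.+1.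
  transitivity (\sum_(i < k.+2) C i); last by rewrite big_ord_recr.
  by rewrite [RHS]big_ord_recl C0 add0r.
have SE2 : \sum_(j < k.+2) (AL k.+1 j)^-1 * (F - PL j) ^+ n = \sum_(j < k.+2) D j.
  by apply: eq_bigr => j _; rewrite gE.
rewrite SE2 [\sum_(j < k.+2) D j]big_ord_recr /= H1 -/s mulrCA T H2.
have CD : C k.+1 = PL k.+1 * D k.+1 by rewrite /C /D mulrA.
rewrite CD; field.
exact: p0.
Qed.

End Main.

From HB Require Import structures.
From mathcomp Require Import all_boot all_order all_algebra complex.
From mathcomp Require Import Rstruct zify ring boolp.
Set Implicit Arguments. Unset Strict Implicit. Unset Printing Implicit Defensive.
Import Order.TTheory GRing.Theory Num.Theory.
Local Open Scope ring_scope.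

Lemma lsv_sum (I : Type) (r : seq I) (Pr : pred I) (G : I -> LS) :
  lsv (\sum_(i <- r | Pr i) G i) = \big[@ladd KK/lzero KK]_(i <- r | Pr i) lsv (G i).
Proof. exact: (big_morph lsv lsvD lsv0). Qed.

Lemma lsv_prod (I : Type) (r : seq I) (Pr : pred I) (G : I -> LS) :
  lsv (\prod_(i <- r | Pr i) G i) = \big[@lmul KK/lone KK]_(i <- r | Pr i) lsv (G i).
Proof. exact: (big_morph lsv lsvM lsv1). Qed.

Lemma iter_eq q (y : LS) k : iter k (lnegxsigma q) (lsv y) = lsv (iter k (NL q) y).
Proof. by elim: k => [|k IH] //=; rewrite IH. Qed.

Lemma Pm_eq q (Pl : LS) m : Pm q (lsv Pl) m = lsv (PL q Pl m).
Proof.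
case: m => [|[|m]]; first by rewrite /PL big_ord0.
  by rewrite /PL big_ord1.
by rewrite /PL lsv_sum /=; apply: eq_bigr => i _; rewrite iter_eq.
Qed.

Lemma Akj_eq q (Pl : LS) k j : Akj q (lsv Pl) k j = lsv (AL q Pl k j).
Proof.
rewrite /AL lsv_prod /Akj; apply: eq_bigr => l _.
by rewrite !Pm_eq.
Qed.

Lemma Lop_eq q (Pl : LS) n k (y : LS) : Lop q (lsv Pl) n k (lsv y) = lsv (LopL q Pl n k y).
Proof.
elim: k => [|k IH] //=.
by rewrite IH /Lstep Pm_eq lxpowE lscaleE.
Qed.

Unset Implicit Arguments.
Set Strict Implicit.

Theorem lemma1 (q : Cplx) (P f : lseries Cplx) (n k : nat) :
  q != 0 ->
  is_laurent P -> is_laurent f -> P <> lzero Cplx ->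
  ladd (lmul (lX Cplx) (lsigma q f)) f = P ->
  (1 <= k <= n)%N ->
  Lop q P n k (lpow f n) =
  lscale ((-1) ^+ ((k * (2 * n - k + 1)) %/ 2))
    (\big[@ladd Cplx/lzero Cplx]_(j < k.+1)
        lmul (linv (Akj q P k j)) (lpow (ladd f (lopp (Pm q P j))) n)).
Proof.
move=> q0 lP lf Pnz hP /andP [_ kn].
pose Fl := MkLS lf; pose Pl := MkLS lP.
have hP' : XL * sigL q Fl + Fl = Pl by apply: ls_inj.
have Pnz' : Pl != 0 by apply/eqP => /(congr1 lsv).
change f with (lsv Fl); change P with (lsv Pl).
rewrite lpowE Lop_eq (main q0 hP' Pnz' kn).
rewrite -lscaleE /ee; congr lscale.
rewrite lsv_sum; apply: eq_bigr => j _.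
rewrite lsvM lsvV Akj_eq Pm_eq.
by change (ladd (lsv Fl) (lopp (lsv (PL q Pl j)))) with (lsv (Fl - PL q Pl j)); rewrite lpowE.
Qed.
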